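(* Let $\pi$ be a representation of a normed $*$-algebra $A$ in a pre-Hilbert space $H$, and assume that $\pi$ is weakly continuous on $A_{sa}$. Then every operator $\pi(a)$ $(a\in A)$ is bounded, and $\|\pi(a)\|\le r_\sigma(a)$ for all $a\in A$.
   Context: All algebras are complex. A normed $*$-algebra is a complex algebra $A$ with an involution $a\mapsto a^*$ (conjugate linear, $(ab)^*=b^*a^*$, $a^{**}=a$) and a norm $|\cdot|$ with $|ab|\le|a||b|$; the involution need not be continuous. $A_{sa}=\{a\in A:a=a^*\}$, viewed as a real normed space. For $a\in A$, $r_\lambda(a):=\inf_{n\ge1}|a^n|^{1/n}$ and $r_\sigma(a):=r_\lambda(a^*a)^{1/2}$. A representation of $A$ in a (complex, not necessarily complete) pre-Hilbert space $H$ is an algebra homomorphism $\pi$ from $A$ into the algebra of all linear operators $H\to H$ such that $\langle\pi(a)x,y\rangle=\langle x,\pi(a^* )y\rangle$ for all $x,y\in H$, $a\in A$. $\pi$ is weakly continuous on $A_{sa}$ if for every $x\in H$ the functional $a\mapsto\langle\pi(a)x,x\rangle$ is continuous on $A_{sa}$ (with respect to the norm of $A$). *)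

(* Defs.v *)
From Stdlib Require Import Reals Lra.
Open Scope R_scope.

Definition C : Type := (R * R)%type.
Definition Cre (z : C) : R := fst z.
Definition Cim (z : C) : R := snd z.
Definition C0 : C := (0, 0).
Definition C1 : C := (1, 0).
Definition Cadd (z w : C) : C := (Cre z + Cre w, Cim z + Cim w).
Definition Copp (z : C) : C := (- Cre z, - Cim z).
Definition Cmul (z w : C) : C :=
  (Cre z * Cre w - Cim z * Cim w, Cre z * Cim w + Cim z * Cre w).
Definition Cconj (z : C) : C := (Cre z, - Cim z).
Definition Cmod (z : C) : R := sqrt (Cre z ^ 2 + Cim z ^ 2).

(** * Normed *-algebras (complex algebra, submultiplicative norm,
      involution not assumed continuous) *)
Record NormedStarAlgebra := {
  nsa_car :> Type;
  nsa_zero : nsa_car;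
  nsa_add : nsa_car -> nsa_car -> nsa_car;
  nsa_opp : nsa_car -> nsa_car;
  nsa_scal : C -> nsa_car -> nsa_car;
  nsa_mul : nsa_car -> nsa_car -> nsa_car;
  nsa_star : nsa_car -> nsa_car;
  nsa_norm : nsa_car -> R;
  nsa_add_assoc : forall a b c, nsa_add a (nsa_add b c) = nsa_add (nsa_add a b) c;
  nsa_add_comm : forall a b, nsa_add a b = nsa_add b a;
  nsa_add_0_l : forall a, nsa_add nsa_zero a = a;
  nsa_add_opp_r : forall a, nsa_add a (nsa_opp a) = nsa_zero;
  nsa_scal_assoc : forall l m a, nsa_scal l (nsa_scal m a) = nsa_scal (Cmul l m) a;
  nsa_scal_1 : forall a, nsa_scal C1 a = a;
  nsa_scal_add_l : forall l a b,
    nsa_scal l (nsa_add a b) = nsa_add (nsa_scal l a) (nsa_scal l b);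
  nsa_scal_add_r : forall l m a,
    nsa_scal (Cadd l m) a = nsa_add (nsa_scal l a) (nsa_scal m a);
  nsa_mul_assoc : forall a b c, nsa_mul a (nsa_mul b c) = nsa_mul (nsa_mul a b) c;
  nsa_mul_add_l : forall a b c,
    nsa_mul (nsa_add a b) c = nsa_add (nsa_mul a c) (nsa_mul b c);
  nsa_mul_add_r : forall a b c,
    nsa_mul a (nsa_add b c) = nsa_add (nsa_mul a b) (nsa_mul a c);
  nsa_mul_scal_l : forall l a b, nsa_mul (nsa_scal l a) b = nsa_scal l (nsa_mul a b);
  nsa_mul_scal_r : forall l a b, nsa_mul a (nsa_scal l b) = nsa_scal l (nsa_mul a b);
  nsa_star_add : forall a b, nsa_star (nsa_add a b) = nsa_add (nsa_star a) (nsa_star b);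
  nsa_star_scal : forall l a, nsa_star (nsa_scal l a) = nsa_scal (Cconj l) (nsa_star a);
  nsa_star_mul : forall a b, nsa_star (nsa_mul a b) = nsa_mul (nsa_star b) (nsa_star a);
  nsa_star_invol : forall a, nsa_star (nsa_star a) = a;
  nsa_norm_nonneg : forall a, 0 <= nsa_norm a;
  nsa_norm_eq0 : forall a, nsa_norm a = 0 -> a = nsa_zero;
  nsa_norm_triangle : forall a b, nsa_norm (nsa_add a b) <= nsa_norm a + nsa_norm b;
  nsa_norm_scal : forall l a, nsa_norm (nsa_scal l a) = Cmod l * nsa_norm a;
  nsa_norm_mul : forall a b, nsa_norm (nsa_mul a b) <= nsa_norm a * nsa_norm b
}.

Arguments nsa_zero {_}.
Arguments nsa_add {_}.
Arguments nsa_opp {_}.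
Arguments nsa_scal {_}.
Arguments nsa_mul {_}.
Arguments nsa_star {_}.
Arguments nsa_norm {_}.

Definition self_adjoint {A : NormedStarAlgebra} (a : A) : Prop := nsa_star a = a.

(** a ^ (k+1) *)
Fixpoint apowS {A : NormedStarAlgebra} (a : A) (k : nat) : A :=
  match k with
  | O => a
  | S k' => nsa_mul a (apowS a k')
  end.

(** t ^ (1/n) for t >= 0, n >= 1 (with 0 ^ (1/n) = 0) *)
Definition nroot (n : nat) (t : R) : R :=
  if Rle_dec t 0 then 0 else Rpower t (/ INR n).

(** [is_r_lambda a r] : r = inf_{n >= 1} |a^n|^{1/n} (greatest lower bound) *)
Definition is_r_lambda {A : NormedStarAlgebra} (a : A) (r : R) : Prop :=
  (forall k : nat, r <= nroot (S k) (nsa_norm (apowS a k))) /\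
  (forall s : R, (forall k : nat, s <= nroot (S k) (nsa_norm (apowS a k))) -> s <= r).

(** [is_r_sigma a s] : s = r_sigma(a) = r_lambda(a^* a)^{1/2} *)
Definition is_r_sigma {A : NormedStarAlgebra} (a : A) (s : R) : Prop :=
  exists r, is_r_lambda (nsa_mul (nsa_star a) a) r /\ s = sqrt r.

(** * Complex pre-Hilbert spaces (not necessarily complete);
      inner product linear in the first, conjugate linear in the second
      argument *)
Record PreHilbert := {
  ph_car :> Type;
  ph_zero : ph_car;
  ph_add : ph_car -> ph_car -> ph_car;
  ph_opp : ph_car -> ph_car;
  ph_scal : C -> ph_car -> ph_car;
  ph_inner : ph_car -> ph_car -> C;
  ph_add_assoc : forall x y z, ph_add x (ph_add y z) = ph_add (ph_add x y) z;
  ph_add_comm : forall x y, ph_add x y = ph_add y x;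
  ph_add_0_l : forall x, ph_add ph_zero x = x;
  ph_add_opp_r : forall x, ph_add x (ph_opp x) = ph_zero;
  ph_scal_assoc : forall l m x, ph_scal l (ph_scal m x) = ph_scal (Cmul l m) x;
  ph_scal_1 : forall x, ph_scal C1 x = x;
  ph_scal_add_l : forall l x y,
    ph_scal l (ph_add x y) = ph_add (ph_scal l x) (ph_scal l y);
  ph_scal_add_r : forall l m x,
    ph_scal (Cadd l m) x = ph_add (ph_scal l x) (ph_scal m x);
  ph_inner_add_l : forall x y z,
    ph_inner (ph_add x y) z = Cadd (ph_inner x z) (ph_inner y z);
  ph_inner_scal_l : forall l x y, ph_inner (ph_scal l x) y = Cmul l (ph_inner x y);
  ph_inner_conj : forall x y, ph_inner y x = Cconj (ph_inner x y);
  ph_inner_pos : forall x, 0 <= Cre (ph_inner x x);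
  ph_inner_def : forall x, ph_inner x x = C0 -> x = ph_zero
}.

Arguments ph_zero {_}.
Arguments ph_add {_}.
Arguments ph_opp {_}.
Arguments ph_scal {_}.
Arguments ph_inner {_}.

Definition ph_norm {H : PreHilbert} (x : H) : R := sqrt (Cre (ph_inner x x)).

Definition is_linear_op {H : PreHilbert} (T : H -> H) : Prop :=
  (forall x y, T (ph_add x y) = ph_add (T x) (T y)) /\
  (forall l x, T (ph_scal l x) = ph_scal l (T x)).

Definition is_representation {A : NormedStarAlgebra} {H : PreHilbert}
    (pi : A -> H -> H) : Prop :=
  (forall a, is_linear_op (pi a)) /\
  (forall a b x, pi (nsa_add a b) x = ph_add (pi a x) (pi b x)) /\
  (forall l a x, pi (nsa_scal l a) x = ph_scal l (pi a x)) /\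
  (forall a b x, pi (nsa_mul a b) x = pi a (pi b x)) /\
  (forall a x y, ph_inner (pi a x) y = ph_inner x (pi (nsa_star a) y)).

Definition weakly_continuous_sa {A : NormedStarAlgebra} {H : PreHilbert}
    (pi : A -> H -> H) : Prop :=
  forall (x : H) (a : A), self_adjoint a ->
    forall eps, 0 < eps -> exists delta, 0 < delta /\
      forall b : A, self_adjoint b ->
        nsa_norm (nsa_add b (nsa_opp a)) < delta ->
        Cmod (Cadd (ph_inner (pi b x) x) (Copp (ph_inner (pi a x) x))) < eps.

Definition bounded_op {H : PreHilbert} (T : H -> H) : Prop :=
  exists M : R, forall x : H, ph_norm (T x) <= M * ph_norm x.

(* Main.v *)
Require Import Defs.
From Stdlib Require Import Reals.
From Stdlib Require Import Lra Lia Psatz Classical.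
Open Scope R_scope.

Lemma nsa_add_self_zero (A : NormedStarAlgebra) (u : A) : nsa_add u u = u -> u = nsa_zero.
Proof.
  intros E.
  assert (E2 : nsa_add (nsa_add u u) (nsa_opp u) = nsa_add u (nsa_opp u)) by now rewrite E.
  rewrite <- nsa_add_assoc, nsa_add_opp_r in E2.
  rewrite nsa_add_comm, nsa_add_0_l in E2. exact E2.
Qed.

Lemma C0_add : Cadd C0 C0 = C0.
Proof. unfold Cadd, C0, Cre, Cim; simpl; f_equal; ring. Qed.

Lemma nsa_scal_C0 (A : NormedStarAlgebra) (y : A) : nsa_scal C0 y = nsa_zero.
Proof. apply nsa_add_self_zero. rewrite <- nsa_scal_add_r, C0_add. reflexivity. Qed.

Lemma nsa_opp_zero (A : NormedStarAlgebra) : @nsa_opp A nsa_zero = nsa_zero.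
Proof. pose proof (nsa_add_opp_r A nsa_zero) as E. rewrite nsa_add_0_l in E. exact E. Qed.

Lemma Cconj_C0 : Cconj C0 = C0.
Proof. unfold Cconj, C0, Cre, Cim; simpl; f_equal; ring. Qed.

Lemma nsa_star_zero (A : NormedStarAlgebra) : @nsa_star A nsa_zero = nsa_zero.
Proof.
  rewrite <- (nsa_scal_C0 A nsa_zero), nsa_star_scal, Cconj_C0.
  rewrite !nsa_scal_C0. reflexivity.
Qed.

Lemma apowS_mul (A : NormedStarAlgebra) (h : A) i j :
  nsa_mul (apowS h i) (apowS h j) = apowS h (i + j + 1).
Proof.
  induction i; simpl.
  - replace (j + 1)%nat with (S j) by lia. reflexivity.
  - rewrite <- nsa_mul_assoc, IHi. reflexivity.
Qed.

Fixpoint sq_iter {A : NormedStarAlgebra} (h : A) (j : nat) : A :=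
  match j with O => h | S j' => nsa_mul (sq_iter h j') (sq_iter h j') end.

Lemma pow2_ge1 j : (1 <= 2 ^ j)%nat.
Proof. induction j; simpl; lia. Qed.

Lemma sq_iter_pow (A : NormedStarAlgebra) (h : A) j : sq_iter h j = apowS h (2 ^ j - 1).
Proof.
  induction j; simpl. reflexivity.
  rewrite IHj, apowS_mul. f_equal. pose proof (pow2_ge1 j). lia.
Qed.

Lemma sq_iter_sa (A : NormedStarAlgebra) (h : A) j :
  self_adjoint h -> self_adjoint (sq_iter h j).
Proof.
  unfold self_adjoint; intros Hh; induction j; simpl; auto.
  rewrite nsa_star_mul, IHj; reflexivity.
Qed.

Fixpoint Kf {A : NormedStarAlgebra} (h : A) (rho : R) (n : nat) : R :=
  match n with
  | O => nsa_norm (apowS h 0) / rho ^ 1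
  | S n' => Rmax (Kf h rho n') (nsa_norm (apowS h n) / rho ^ (S n))
  end.

Lemma Kf_ge (A : NormedStarAlgebra) (h : A) rho n i :
  (i <= n)%nat -> nsa_norm (apowS h i) / rho ^ (S i) <= Kf h rho n.
Proof.
  induction n; intros Hi.
  - replace i with 0%nat by lia. cbn [Kf]. apply Rle_refl.
  - destruct (Nat.eq_dec i (S n)) as [->|Hne].
    + cbn [Kf]. apply Rmax_r.
    + apply Rle_trans with (Kf h rho n). apply IHn; lia. cbn [Kf]. apply Rmax_l.
Qed.

Lemma pow_bound (A : NormedStarAlgebra) (h : A) rho k :
  0 < rho -> nsa_norm (apowS h k) < rho ^ (S k) ->
  forall m, nsa_norm (apowS h m) <= Kf h rho k * rho ^ (S m).
Proof.
  intros Hr Hk m. induction m as [m IH] using (well_founded_induction Wf_nat.lt_wf).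
  destruct (Compare_dec.le_lt_dec m k) as [Hm|Hm].
  - pose proof (Kf_ge A h rho k m Hm) as H1. pose proof (pow_lt rho (S m) Hr).
    replace (nsa_norm (apowS h m)) with (nsa_norm (apowS h m) / rho ^ (S m) * rho ^ (S m))
      by (field; apply pow_nonzero; lra).
    apply Rmult_le_compat_r; lra.
  - assert (E : apowS h m = nsa_mul (apowS h k) (apowS h (m - k - 1))).
    { rewrite apowS_mul. f_equal. lia. }
    rewrite E.
    replace (rho ^ (S m)) with (rho ^ (S k) * rho ^ (S (m - k - 1)))
      by (rewrite <- pow_add; f_equal; lia).
    eapply Rle_trans. apply nsa_norm_mul.
    apply Rle_trans with (rho ^ (S k) * (Kf h rho k * rho ^ (S (m - k - 1)))).
    + apply Rmult_le_compat; try apply nsa_norm_nonneg; try lra. apply IH; lia.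
    + right; ring.
Qed.

Lemma ph_norm_sq (H : PreHilbert) (x : H) : ph_norm x ^ 2 = Cre (ph_inner x x).
Proof. unfold ph_norm. apply pow2_sqrt, ph_inner_pos. Qed.

Lemma ph_norm_nonneg (H : PreHilbert) (x : H) : 0 <= ph_norm x.
Proof. apply sqrt_pos. Qed.

Lemma quad_lemma A p Cc : 0 <= A -> 0 <= Cc ->
  (forall t, 0 <= A + 2 * t * p + t * t * Cc) -> p <= sqrt A * sqrt Cc.
Proof.
  intros HA HC Ht.
  destruct (Rle_or_lt p 0) as [Hp|Hp].
  { pose proof (sqrt_pos A); pose proof (sqrt_pos Cc). nra. }
  destruct (Req_dec Cc 0) as [HC0|HC0].
  - exfalso. specialize (Ht (- (A + 1) / (2 * p))). subst Cc.
    replace (A + 2 * (- (A + 1) / (2 * p)) * p + - (A + 1) / (2 * p) * (- (A + 1) / (2 * p)) * 0)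
      with (-1) in Ht by (field; lra). lra.
  - specialize (Ht (- p / Cc)).
    replace (A + 2 * (- p / Cc) * p + - p / Cc * (- p / Cc) * Cc) with ((A * Cc - p * p) / Cc)
      in Ht by (field; lra).
    assert (Hpp : p * p <= A * Cc).
    { unfold Rdiv in Ht. assert (0 < / Cc) by (apply Rinv_0_lt_compat; lra). nra. }
    rewrite <- sqrt_mult by lra. rewrite <- (sqrt_square p) at 1 by lra.
    apply sqrt_le_1_alt. exact Hpp.
Qed.

Lemma CS (H : PreHilbert) (u w : H) : Cre (ph_inner u w) <= ph_norm u * ph_norm w.
Proof.
  unfold ph_norm. apply quad_lemma; try apply ph_inner_pos.
  intros t. pose proof (ph_inner_pos H (ph_add u (ph_scal (t, 0) w))) as P.
  rewrite ph_inner_add_l, ph_inner_scal_l in P.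
  rewrite (ph_inner_conj H (ph_add u (ph_scal (t, 0) w)) u) in P.
  rewrite (ph_inner_conj H (ph_add u (ph_scal (t, 0) w)) w) in P.
  rewrite !ph_inner_add_l, !ph_inner_scal_l in P.
  rewrite (ph_inner_conj H u w) in P.
  destruct (ph_inner u u) as [a1 a2], (ph_inner u w) as [p q], (ph_inner w w) as [c1 c2].
  unfold Cadd, Cmul, Cconj, Cre, Cim in *. simpl in *. nra.
Qed.

Lemma Cre_le_Cmod z : Cre z <= Cmod z.
Proof.
  unfold Cmod. destruct (Rle_or_lt (Cre z) 0).
  - pose proof (sqrt_pos (Cre z ^ 2 + Cim z ^ 2)); lra.
  - rewrite <- (sqrt_pow2 (Cre z)) at 1 by lra. apply sqrt_le_1_alt.
    pose proof (pow2_ge_0 (Cim z)); lra.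
Qed.

Lemma norm_id (A : NormedStarAlgebra) (H : PreHilbert) (pi : A -> H -> H)
  (Hpi : is_representation pi) (b : A) (x : H) :
  ph_norm (pi b x) ^ 2 = Cre (ph_inner (pi (nsa_mul (nsa_star b) b) x) x).
Proof.
  destruct Hpi as (Hlin & Hadd & Hscal & Hmul & Hadj).
  rewrite ph_norm_sq, Hadj, <- Hmul, ph_inner_conj. reflexivity.
Qed.

Lemma wc_bound (A : NormedStarAlgebra) (H : PreHilbert) (pi : A -> H -> H)
  (Hpi : is_representation pi) (Hwc : weakly_continuous_sa pi) (x : H) :
  exists Cst, 0 <= Cst /\ forall b : A, self_adjoint b ->
    Cre (ph_inner (pi b x) x) <= Cst * nsa_norm b.
Proof.
  destruct Hpi as (Hlin & Hadd & Hscal & Hmul & Hadj).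
  assert (Hsa0 : self_adjoint (@nsa_zero A)) by apply nsa_star_zero.
  destruct (Hwc x nsa_zero Hsa0 1 Rlt_0_1) as (d & Hd & Hb).
  assert (Hf0 : Cre (ph_inner (pi nsa_zero x) x) = 0).
  { rewrite <- (nsa_scal_C0 A nsa_zero), Hscal, ph_inner_scal_l.
    unfold Cmul, C0, Cre, Cim; simpl; ring. }
  exists (2 / d). split.
  { apply Rlt_le; unfold Rdiv; apply Rmult_lt_0_compat; [lra | apply Rinv_0_lt_compat; lra]. }
  intros b Hb_sa.
  pose proof (nsa_norm_nonneg A b) as Hnn.
  destruct (Req_dec (nsa_norm b) 0) as [Hn|Hn].
  { apply nsa_norm_eq0 in Hn. subst b. rewrite Hf0.
    apply Rmult_le_pos; [| apply nsa_norm_nonneg].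
    apply Rlt_le; unfold Rdiv; apply Rmult_lt_0_compat; [lra | apply Rinv_0_lt_compat; lra]. }
  set (c := d / (2 * nsa_norm b)).
  assert (Hc : 0 < c) by (unfold c; apply Rdiv_lt_0_compat; lra).
  set (b' := nsa_scal (c, 0) b).
  assert (Hsa' : self_adjoint b').
  { unfold b', self_adjoint in *. rewrite nsa_star_scal, Hb_sa. f_equal.
    unfold Cconj, Cre, Cim; simpl. f_equal; ring. }
  assert (Hn' : nsa_norm b' = c * nsa_norm b).
  { unfold b'. rewrite nsa_norm_scal. f_equal. unfold Cmod, Cre, Cim. cbn [fst snd].
    replace (c ^ 2 + 0 ^ 2) with (c * c) by ring. apply sqrt_square; lra. }
  specialize (Hb b' Hsa').
  rewrite nsa_opp_zero, nsa_add_comm, nsa_add_0_l in Hb.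
  assert (Hlt : nsa_norm b' < d).
  { rewrite Hn'; unfold c.
    replace (d / (2 * nsa_norm b) * nsa_norm b) with (d / 2) by (field; lra). lra. }
  specialize (Hb Hlt).
  pose proof (Cre_le_Cmod (Cadd (ph_inner (pi b' x) x) (Copp (ph_inner (pi nsa_zero x) x)))) as Hre.
  assert (Hre2 : Cre (Cadd (ph_inner (pi b' x) x) (Copp (ph_inner (pi nsa_zero x) x)))
                 = c * Cre (ph_inner (pi b x) x)).
  { unfold b'. rewrite Hscal, ph_inner_scal_l.
    unfold Cadd, Copp, Cmul, Cre, Cim in *. cbn [fst snd] in *. rewrite Hf0. ring. }
  assert (E1 : c * (2 / d * nsa_norm b) = 1) by (unfold c; field; lra).
  nra.
Qed.

Lemma bern t n : 1 <= t -> 1 + INR n * (t - 1) <= t ^ n.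
Proof.
  intros Ht. induction n.
  - simpl; lra.
  - rewrite S_INR. simpl. pose proof (pos_INR n).
    assert (t * (1 + INR n * (t - 1)) <= t * t ^ n) by (apply Rmult_le_compat_l; lra).
    assert (0 <= INR n * (t - 1) * (t - 1)) by (apply Rmult_le_pos; [apply Rmult_le_pos|]; lra).
    nra.
Qed.

Lemma pow_lt_mono y r n : 0 <= y -> y < r -> y ^ S n < r ^ S n.
Proof.
  intros Hy Hr. induction n.
  - simpl; lra.
  - change (y * y ^ S n < r * r ^ S n). pose proof (pow_le y (S n) Hy). nra.
Qed.

Lemma unbounded X Y D : 0 <= X -> 0 < Y ->
  (forall j, X ^ (2 ^ S j) <= D * Y ^ (2 ^ S j)) -> X <= Y.
Proof.
  intros HX HY Hj. destruct (Rle_or_lt X Y) as [|Hlt]; auto. exfalso.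
  set (t := X / Y).
  assert (EX : X = t * Y) by (unfold t; field; lra).
  assert (Ht : 1 < t) by (rewrite EX in Hlt; nra).
  destruct (INR_unbounded (D / (t - 1))) as [n Hn].
  specialize (Hj n). rewrite EX, Rpow_mult_distr in Hj.
  pose proof (pow_lt Y (2 ^ S n) HY) as HYp.
  assert (HtD : t ^ (2 ^ S n) <= D) by nra.
  pose proof (bern t (2 ^ S n) (Rlt_le _ _ Ht)) as Hb.
  assert (Hle : INR n <= INR (2 ^ S n)).
  { apply le_INR. pose proof (Nat.pow_gt_lin_r 2 (S n)). lia. }
  assert (HnD : D < INR n * (t - 1)).
  { apply (Rmult_lt_compat_r (t - 1)) in Hn; [|lra].
    unfold Rdiv in Hn. rewrite Rmult_assoc, Rinv_l in Hn by lra. lra. }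
  nra.
Qed.

Lemma nroot_nonneg n t : 0 <= nroot n t.
Proof.
  unfold nroot. destruct (Rle_dec t 0). lra. unfold Rpower. apply Rlt_le, exp_pos.
Qed.

Lemma nroot_lt k t rho : 0 <= t -> 0 < rho -> nroot (S k) t < rho -> t < rho ^ S k.
Proof.
  unfold nroot. destruct (Rle_dec t 0) as [Ht0|Ht0].
  - intros Ht Hr _. pose proof (pow_lt rho (S k) Hr). lra.
  - intros Ht Hr Hlt. set (y := Rpower t (/ INR (S k))) in *.
    assert (Hy : 0 < y) by (unfold y, Rpower; apply exp_pos).
    assert (E : y ^ S k = t).
    { rewrite <- Rpower_pow by exact Hy. unfold y. rewrite Rpower_mult.
      rewrite Rinv_l. apply Rpower_1; lra. apply not_0_INR; lia. }
    rewrite <- E. apply pow_lt_mono; lra.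
Qed.

Lemma sq_to u w rho : 0 <= u -> 0 <= w -> 0 <= rho -> u ^ 2 <= rho * w ^ 2 -> u <= sqrt rho * w.
Proof.
  intros Hu Hw Hr Hle.
  rewrite <- (sqrt_pow2 u) by lra. rewrite <- (sqrt_pow2 w) by lra.
  rewrite <- sqrt_mult by (try lra; apply pow_le; lra).
  apply sqrt_le_1_alt. exact Hle.
Qed.

Lemma eps_lemma u w r : 0 <= w -> (forall eps, 0 < eps -> u <= (r + eps) * w) -> u <= r * w.
Proof.
  intros Hw Heps. destruct (Rle_or_lt u (r * w)) as [|Hlt]; auto. exfalso.
  destruct (Req_dec w 0) as [->|Hw0].
  - specialize (Heps 1 Rlt_0_1). nra.
  - assert (Hp : 0 < (u - r * w) / (2 * w)) by (apply Rdiv_lt_0_compat; lra).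
    specialize (Heps _ Hp).
    replace ((r + (u - r * w) / (2 * w)) * w) with (r * w + (u - r * w) / 2) in Heps
      by (field; lra). lra.
Qed.

Lemma core (A : NormedStarAlgebra) (H : PreHilbert) (pi : A -> H -> H)
  (Hpi : is_representation pi) (Hwc : weakly_continuous_sa pi) (h : A) rho k :
  self_adjoint h -> 0 < rho -> nsa_norm (apowS h k) < rho ^ S k ->
  forall x : H, ph_norm (pi h x) <= rho * ph_norm x.
Proof.
  intros Hh Hr Hk x.
  destruct (wc_bound A H pi Hpi Hwc x) as (Cst & HC & HCb).
  pose proof (pow_bound A h rho k Hr Hk) as HK.
  set (K := Kf h rho k) in *.
  assert (HK0 : 0 <= K).
  { pose proof (HK 0%nat). pose proof (nsa_norm_nonneg A (apowS h 0)).
    pose proof (pow_lt rho 1 Hr). nra. }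
  set (v := fun j => ph_norm (pi (sq_iter h j) x)).
  set (nx := ph_norm x).
  assert (Hv : forall j, 0 <= v j) by (intros; apply ph_norm_nonneg).
  assert (Hnx : 0 <= nx) by apply ph_norm_nonneg.
  assert (F1 : forall j, v j ^ 2 = Cre (ph_inner (pi (sq_iter h (S j)) x) x)).
  { intros j. unfold v. rewrite (norm_id A H pi Hpi). simpl sq_iter.
    rewrite (sq_iter_sa A h j Hh). reflexivity. }
  assert (F2 : forall j, v j ^ 2 <= v (S j) * nx).
  { intros j. rewrite F1. apply CS. }
  assert (F3 : forall j, v j ^ 2 <= Cst * K * rho ^ (2 ^ S j)).
  { intros j. rewrite F1. eapply Rle_trans. apply HCb, sq_iter_sa, Hh.
    rewrite sq_iter_pow.
    replace (rho ^ (2 ^ S j)) with (rho ^ S (2 ^ S j - 1))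
      by (f_equal; pose proof (pow2_ge1 (S j)); lia).
    rewrite Rmult_assoc. apply Rmult_le_compat_l; auto. }
  change (v 0%nat <= rho * nx).
  destruct (Req_dec nx 0) as [Hz|Hz].
  { pose proof (F2 0%nat). rewrite Hz in *. pose proof (Hv 0%nat). nra. }
  assert (Hnxp : 0 < nx) by lra.
  assert (F4 : forall j, v 0%nat ^ (2 ^ j) * nx <= v j * nx ^ (2 ^ j)).
  { induction j.
    - simpl. right; ring.
    - replace (2 ^ S j)%nat with (2 ^ j * 2)%nat by (simpl; lia).
      rewrite !pow_mult.
      set (X := v 0%nat ^ (2 ^ j)) in *. set (Y := nx ^ (2 ^ j)) in *.
      assert (HX : 0 <= X) by (apply pow_le; auto).
      assert (HY : 0 <= Y) by (apply pow_le; auto).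
      assert (S1 : (X * nx) ^ 2 <= (v j * Y) ^ 2).
      { apply pow_incr. split; [apply Rmult_le_pos; lra | exact IHj]. }
      pose proof (F2 j) as S2. pose proof (Hv j). pose proof (Hv (S j)).
      assert (S3 : v j ^ 2 * Y ^ 2 <= v (S j) * nx * Y ^ 2).
      { apply Rmult_le_compat_r; [apply pow2_ge_0 | exact S2]. }
      apply (Rmult_le_reg_r nx); [exact Hnxp|].
      replace (X ^ 2 * nx * nx) with ((X * nx) ^ 2) by ring.
      replace (v (S j) * Y ^ 2 * nx) with (v (S j) * nx * Y ^ 2) by ring.
      replace ((v j * Y) ^ 2) with (v j ^ 2 * Y ^ 2) in S1 by ring.
      lra. }
  apply (unbounded (v 0%nat) (rho * nx) (Cst * K / nx ^ 2)); auto.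
  { apply Rmult_lt_0_compat; lra. }
  intros j.
  pose proof (F4 j) as G4. pose proof (F3 j) as G3.
  replace (2 ^ S j)%nat with (2 ^ j * 2)%nat in * by (simpl; lia).
  rewrite Rpow_mult_distr, !pow_mult.
  set (X := v 0%nat ^ (2 ^ j)) in *. set (Y := nx ^ (2 ^ j)) in *.
  set (Rr := (rho ^ (2 ^ j)) ^ 2) in *.
  rewrite pow_mult in G3. fold Rr in G3.
  assert (HX : 0 <= X) by (apply pow_le; auto).
  assert (HY : 0 <= Y) by (apply pow_le; auto).
  assert (S1 : (X * nx) ^ 2 <= (v j * Y) ^ 2).
  { apply pow_incr. split; [apply Rmult_le_pos; lra | exact G4]. }
  assert (S3 : v j ^ 2 * Y ^ 2 <= Cst * K * Rr * Y ^ 2).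
  { apply Rmult_le_compat_r; [apply pow2_ge_0 | exact G3]. }
  assert (Hnx2 : 0 < nx ^ 2) by (apply pow_lt; lra).
  apply (Rmult_le_reg_r (nx ^ 2)); [exact Hnx2|].
  replace (Cst * K / nx ^ 2 * (Rr * Y ^ 2) * nx ^ 2) with (Cst * K * Rr * Y ^ 2)
    by (field; lra).
  replace ((X * nx) ^ 2) with (X ^ 2 * nx ^ 2) in S1 by ring.
  replace ((v j * Y) ^ 2) with (v j ^ 2 * Y ^ 2) in S1 by ring.
  lra.
Qed.

Theorem theorem22p5 (A : NormedStarAlgebra) (H : PreHilbert) (pi : A -> H -> H)
  (Hpi : is_representation pi) (Hwc : weakly_continuous_sa pi) :
  forall a : A,
    bounded_op (pi a) /\
    (forall s : R, is_r_sigma a s -> forall x : H, ph_norm (pi a x) <= s * ph_norm x).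
Proof.
  intros a.
  set (h := nsa_mul (nsa_star a) a).
  assert (Hh : self_adjoint h).
  { unfold h, self_adjoint. rewrite nsa_star_mul, nsa_star_invol. reflexivity. }
  assert (Key : forall rho k, 0 < rho -> nsa_norm (apowS h k) < rho ^ S k ->
            forall x, ph_norm (pi a x) ^ 2 <= rho * ph_norm x ^ 2).
  { intros rho k Hr Hk x. rewrite (norm_id A H pi Hpi). fold h.
    eapply Rle_trans. apply CS.
    pose proof (core A H pi Hpi Hwc h rho k Hh Hr Hk x).
    pose proof (ph_norm_nonneg H x).
    replace (rho * ph_norm x ^ 2) with (rho * ph_norm x * ph_norm x) by ring.
    apply Rmult_le_compat_r; auto. }
  split.
  - exists (sqrt (nsa_norm h + 1)). intros x.
    pose proof (nsa_norm_nonneg A h).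
    assert (Hk0 : nsa_norm (apowS h 0) < (nsa_norm h + 1) ^ 1) by (simpl; lra).
    assert (Hp1 : 0 < nsa_norm h + 1) by lra. pose proof (Key _ 0%nat Hp1 Hk0 x).
    apply sq_to; auto using ph_norm_nonneg; lra.
  - intros s (r & Hr & ->) x.
    destruct Hr as [Hlow Hglb].
    assert (Hr0 : 0 <= r) by (apply Hglb; intros; apply nroot_nonneg).
    apply sq_to; auto using ph_norm_nonneg.
    apply eps_lemma; [apply pow2_ge_0|].
    intros eps Heps.
    destruct (classic (exists k, nroot (S k) (nsa_norm (apowS h k)) < r + eps)) as [[k Hk]|Hno].
    + apply (Key _ k); [lra|]. apply nroot_lt; auto using nsa_norm_nonneg; lra.
    + exfalso.
      assert (r + eps <= r); [|lra].
      apply Hglb. intros k. apply Rnot_lt_le. intros Hc. apply Hno. exists k. exact Hc.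
Qed.
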